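(* For any pure $n$-qubit state $\psi$ and any $0<\tau\le1$, $F_\psi(\tau)\le 2^{M_0(\psi)}\tau$.
   Context: Pauli strings $P_x$, $x\in\{0,1\}^{2n}$, are the $n$-qubit Hermitian Pauli strings; $\alpha_\psi(x)=\mathrm{tr}(\psi P_x)$; the Pauli distribution is $p_\psi(x)=\alpha_\psi(x)^2/2^n$. The CDF is $F_\psi(\tau)=\sum_{x:\,\alpha_\psi(x)^2<\tau}p_\psi(x)$. $M_0(\psi)=\log_2|\{x:\alpha_\psi(x)\neq0\}|-n$. *)

(* Defs.v *)
From mathcomp Require Import all_boot all_order all_algebra.
From mathcomp Require Import reals exp complex mxtens.
Set Implicit Arguments. Unset Strict Implicit. Unset Printing Implicit Defensive.
Import Order.TTheory GRing.Theory Num.Theory.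
Local Open Scope ring_scope.
Local Open Scope complex_scope.

Section Pauli.
Variable R : realType.
Local Notation C := (R[i]).

(* Single-qubit Hermitian Pauli matrix labelled by (a,b) in {0,1}^2:
   (0,0) = I, (1,0) = X, (0,1) = Z, (1,1) = Y = i X Z. *)
Definition pauli1 (ab : bool * bool) : 'M[C]_2 :=
  \matrix_(r < 2, c < 2)
    match ab with
    | (false, false) => if r == c then 1 else 0
    | (true, false)  => if r != c then 1 else 0
    | (false, true)  => if r == c then (if r == 0 :> nat then 1 else -1) else 0
    | (true, true)   => if r == c then 0
                        else if r == 0 :> nat then - 'i else 'i
    end.

Fixpoint pauli_seq (s : seq (bool * bool)) : 'M[C]_(2 ^ size s) :=
  match s with
  | [::] => 1%:M
  | ab :: s' => castmx (esym (expnS 2 (size s')), esym (expnS 2 (size s')))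
                       (pauli1 ab *t pauli_seq s')
  end.

(* The n-qubit Pauli string P_x, x in {0,1}^{2n} encoded as n pairs of bits. *)
Definition pauli (n : nat) (x : n.-tuple (bool * bool)) : 'M[C]_(2 ^ n) :=
  castmx (congr1 (expn 2) (size_tuple x), congr1 (expn 2) (size_tuple x))
         (pauli_seq x).

Definition adjmx (m k : nat) (M : 'M[C]_(m, k)) : 'M[C]_(k, m) :=
  (map_mx Num.conj M)^T.

Definition unit_vec (n : nat) (v : 'cV[C]_(2 ^ n)) : Prop := adjmx v *m v = 1.
Definition pure_state (n : nat) (v : 'cV[C]_(2 ^ n)) : 'M[C]_(2 ^ n) := v *m adjmx v.

Definition alpha (n : nat) (psi : 'M[C]_(2 ^ n)) (x : n.-tuple (bool * bool)) : C :=
  \tr (psi *m pauli x).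

Definition pauli_dist (n : nat) (psi : 'M[C]_(2 ^ n)) (x : n.-tuple (bool * bool)) : C :=
  alpha psi x ^+ 2 / (2 ^ n)%:R.

Definition pauli_cdf (n : nat) (psi : 'M[C]_(2 ^ n)) (tau : R) : C :=
  \sum_(x : n.-tuple (bool * bool) | alpha psi x ^+ 2 < tau%:C) pauli_dist psi x.

Definition log2 (y : R) : R := ln y / ln 2.

Definition M0 (n : nat) (psi : 'M[C]_(2 ^ n)) : R :=
  log2 (#|[set x : n.-tuple (bool * bool) | alpha psi x != 0]|%:R) - n%:R.

End Pauli.

(* Main.v *)
Require Import Defs.
From mathcomp Require Import all_boot all_order all_algebra.
From mathcomp Require Import reals exp complex mxtens.
Import Order.TTheory GRing.Theory Num.Theory.
Local Open Scope ring_scope.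
Local Open Scope complex_scope.

Theorem lemma2 (R : realType) (n : nat) (v : 'cV[R[i]]_(2 ^ n)) (tau : R) :
  unit_vec v -> 0 < tau -> tau <= 1 ->
  pauli_cdf (pure_state v) tau <= ((2 `^ M0 (pure_state v)) * tau)%:C.
Proof.
move=> _ tau0 _.
set psi := pure_state v.
set A := [set x : n.-tuple (bool * bool) | alpha psi x != 0].
set c : R[i] := tau%:C / (2 ^ n)%:R.
have c0 : 0 <= c.
  by rewrite /c divr_ge0 // ?ler0n // lecR ltW.
have step1 : pauli_cdf psi tau <= \sum_(x in A) c.
  rewrite /pauli_cdf /pauli_dist.
  apply: (@le_trans _ _ (\sum_(x | alpha psi x ^+ 2 < tau%:C) (if x \in A then c else 0))).
    apply: ler_sum => x Hx.
    case: ifP; rewrite inE.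
      move=> _; rewrite /c; apply: ler_wpM2r; first by rewrite invr_ge0 ler0n.
      exact: ltW.
    by move/negbFE/eqP => ->; rewrite expr0n /= mul0r.
  rewrite [X in _ <= X]big_mkcond /=.
  rewrite [X in X <= _]big_mkcond /=.
  apply: ler_sum => x _.
  by case: ifP => _ //; case: ifP.
apply: (le_trans step1).
rewrite sumr_const.
have [A0|Apos] := eqVneq #|A| 0%N.
  by rewrite A0 mulr0n lecR mulr_ge0 ?powR_ge0 // ltW.
have Ap : (0 < #|A|%:R :> R) by rewrite ltr0n lt0n.
have -> : 2 `^ M0 psi = #|A|%:R / 2 ^+ n.
  rewrite /M0 -/A powRB; last by apply/implyP => _; rewrite pnatr_eq0.
  rewrite powR_mulrn //; congr (_ / _).
  have n2 : (2:R) != 0 by rewrite pnatr_eq0.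
  rewrite /powR (negbTE n2) /log2 mulfVK; last first.
    by rewrite gt_eqF // ln_gt0 // ltr1n.
  by rewrite lnK // posrE.
have u : (2:R) ^+ n \is a GRing.unit by rewrite unitfE expf_neq0 // pnatr_eq0.
rewrite /c !rmorphM /= rmorphV // rmorphXn /= rmorph_nat natrX.
rewrite (_ : 2%:C = 2) ?rmorph_nat //.
rewrite -mulrnAl -[tau%:C *+ _]mulr_natr [tau%:C * _]mulrC mulrAC.
by rewrite lexx.
Qed.
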